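(* (a) Let $n\ge3$ be odd, $a_0,\dots,a_{n-1}\in\mathbb{R}$ with $a_0<0$, $a_k>0$ for $k\ne0$, and $a_0+a_2<0$, and let $\mathcal A(x)=\det(xI-A')$ where $A'$ is the $n\times n$ matrix with $(A')_{j,j+1}=a_{j+1}$, $(A')_{j,j-1}=-a_{j-1}$ (indices mod $n$), other entries zero. Then there exists $x_2^*>\sqrt{-a_1(a_0+a_2)}$ with $\mathcal A(x_2^* )=0$. (b) Let $\alpha\le-1$, $\beta\ge1$ be integers and $a_k\in\mathbb{R}$ for $\alpha\le k\le\max(\beta,2)$ with $a_0<0$, $a_k>0$ for $k\ne0$, and $a_0+a_2<0$; let $\mathcal T_\alpha^\beta(x)=\det(xI-M)$ where $M$ is indexed by $\alpha,\dots,\beta$ with $M_{j,j+1}=a_{j+1}$, $M_{j,j-1}=-a_{j-1}$, other entries zero. Then there exists $x_1^*>\sqrt{-a_1(a_0+a_2)}$ with $\mathcal T_\alpha^\beta(x_1^* )=0$. *)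

(* Defs.v *)
From HB Require Import structures.
From mathcomp Require Import all_boot all_order all_algebra.
From mathcomp Require Import reals.
Set Implicit Arguments. Unset Strict Implicit. Unset Printing Implicit Defensive.
Import Order.TTheory GRing.Theory Num.Theory.
Local Open Scope ring_scope.

(* Cyclic matrix A' of size n (indices 0..n-1, taken mod n):
   (A')_{j,j+1} = a_{j+1}, (A')_{j,j-1} = - a_{j-1}, other entries 0.
   Equivalently entry (i,j) is a_j if j = i+1 mod n, -a_j if j = i-1 mod n. *)
Definition cycA {R : ringType} (n : nat) (a : nat -> R) : 'M[R]_n :=
  \matrix_(i < n, j < n)
     if (i.+1 %% n == j)%N then a j
     else if (j.+1 %% n == i)%N then - a j else 0.

(* Tridiagonal matrix M indexed by alpha..beta (alpha, beta : int); the
   row/column index i : 'I_(|beta - alpha| + 1) stands for alpha + i. *)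
Definition triM {R : ringType} (alpha beta : int) (a : int -> R) :
  'M[R]_((`|beta - alpha|).+1) :=
  \matrix_(i, j)
     if (i.+1 == j)%N then a (alpha + (j : nat)%:Z)
     else if (j.+1 == i)%N then - a (alpha + (j : nat)%:Z) else 0.

(* Main.v *)
Require Import Defs.
From HB Require Import structures.
From mathcomp Require Import all_boot all_order all_algebra.
From mathcomp Require Import reals.
From mathcomp Require Import polyrcf zify ring lra.
Import Order.TTheory GRing.Theory Num.Theory.
Local Open Scope ring_scope.

Module Aux.
Set Implicit Arguments. Unset Strict Implicit. Unset Printing Implicit Defensive.
Section Dets.
Variable R : comPzRingType.

Definition Mf k (f : nat -> nat -> R) : 'M[R]_k := \matrix_(i < k, j < k) f i j.
Definition sh s (f : nat -> nat -> R) := fun i j => f (i + s)%N (j + s)%N.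

Lemma bumpE h i : bump h i = if (h <= i)%N then i.+1 else i.
Proof. by rewrite /bump; case: leqP; rewrite ?add1n ?add0n. Qed.

Lemma bump0E j : bump 0 j = j.+1.
Proof. by rewrite bumpE. Qed.

Lemma Mf_ext k f g : (forall i j, (i < k)%N -> (j < k)%N -> f i j = g i j) ->
  Mf k f = Mf k g.
Proof. by move=> H; apply/matrixP => i j; rewrite !mxE H. Qed.

Lemma Mf_tr k f : \det (Mf k f) = \det (Mf k (fun i j => f j i)).
Proof. by rewrite -det_tr; apply: congr1; apply/matrixP => i j; rewrite !mxE. Qed.

Lemma Mf_row0 k f : \det (Mf k.+1 f) =
  \sum_(j < k.+1) f 0%N j * ((-1) ^+ j * \det (Mf k (fun i j' => f i.+1 (bump j j')))).
Proof.
rewrite (expand_det_row _ ord0); apply: eq_bigr => j _; rewrite mxE /cofactor add0n.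
congr (_ * (_ * _)); apply: congr1; apply/matrixP => i j'; rewrite !mxE lift0 //.
Qed.

Lemma det_lowtri k f : (forall i j, (i < j)%N -> (j < k)%N -> f i j = 0) ->
  \det (Mf k f) = \prod_(i < k) f i i.
Proof.
elim: k f => [|k IH] f Hf; first by rewrite det_mx00 big_ord0.
rewrite Mf_row0 [in X in X = _]big_ord_recl big1 ?addr0 => [|j _]; last first.
  by rewrite Hf ?mul0r // bumpE; have := ltn_ord j; lia.
rewrite big_ord_recl expr0 mul1r /=; congr (_ * _).
rewrite (IH (fun i j => f i.+1 (bump 0 j))) => [|i j Hij Hj]; last first.
  by apply: Hf; rewrite bumpE /=; lia.
by apply: eq_bigr => i _; rewrite bumpE.
Qed.

Lemma det_uptri k f : (forall i j, (j < i)%N -> (i < k)%N -> f i j = 0) ->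
  \det (Mf k f) = \prod_(i < k) f i i.
Proof. by move=> H; rewrite Mf_tr det_lowtri // => i j Hij Hj; apply: H. Qed.

Lemma det_tri k f :
  (forall j, (1 < j)%N -> (j < k.+2)%N -> f 0%N j = 0) ->
  (forall i, (1 < i)%N -> (i < k.+2)%N -> f i 0%N = 0) ->
  \det (Mf k.+2 f) = f 0%N 0%N * \det (Mf k.+1 (sh 1 f))
     - f 0%N 1%N * f 1%N 0%N * \det (Mf k (sh 2 f)).
Proof.
move=> H0 H1; rewrite Mf_row0 big_ord_recl big_ord_recl big1 ?addr0 => [|j _]; last first.
  by rewrite H0 ?mul0r // bumpE; have := ltn_ord j; lia.
rewrite /= expr0 mul1r (Mf_ext (g := sh 1 f)); last by move=> i j _ _; rewrite /sh /bump /= !addn1.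
congr (_ + _); rewrite (_ : bump 0 0 = 1)// expr1 mulN1r mulrN -mulrA; congr (- (_ * _)).
rewrite Mf_tr Mf_row0 big_ord_recl big1 ?addr0 => [|j _]; last first.
  by rewrite (_ : bump 1 0 = 0)// lift0 H1 ?mul0r //; have := ltn_ord j; lia.
rewrite /= expr0 mul1r; congr (_ * _); rewrite Mf_tr; apply: congr1.
by apply/Mf_ext => i j _ _; rewrite /sh !bumpE /= !addn2.
Qed.

Lemma col2 k h : (forall i, (0 < i)%N -> (i < k.+1)%N -> h i 0%N = 0) ->
  \det (Mf k.+2 h) = h 0%N 0%N * \det (Mf k.+1 (fun i j => h i.+1 j.+1))
    + (-1) ^+ k.+1 * h k.+1 0%N * \det (Mf k.+1 (fun i j => h i j.+1)).
Proof.
move=> H0; rewrite Mf_tr Mf_row0 big_ord_recl big_ord_recr /= big1 ?add0r => [|j _]; last first.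
  rewrite bump0E H0 ?mul0r //; have := ltn_ord j; clear; lia.
rewrite expr0 mul1r bump0E Mf_tr; congr (_ * _ + _).

rewrite mulrCA mulrA; congr (_ * _); rewrite Mf_tr; apply: congr1.
by apply: Mf_ext => i j Hi Hj; rewrite bumpE ltnNge -ltnS Hi.
Qed.

Lemma det_cyc k f :
  (forall i j, (i.+1 < j)%N -> (j < k.+3)%N -> (0 < i)%N || (j < k.+2)%N -> f i j = 0) ->
  (forall i j, (j.+1 < i)%N -> (i < k.+3)%N -> (0 < j)%N || (i < k.+2)%N -> f i j = 0) ->
  \det (Mf k.+3 f) = f 0%N 0%N * \det (Mf k.+2 (sh 1 f))
  - f 0%N 1%N * (f 1%N 0%N * \det (Mf k.+1 (sh 2 f))
       + (-1) ^+ k.+1 * f k.+2 0%N * \prod_(i < k.+1) f i.+1 i.+2)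
  + (-1) ^+ k.+2 * f 0%N k.+2 * (f 1%N 0%N * \prod_(i < k.+1) f i.+2 i.+1
       + (-1) ^+ k.+1 * f k.+2 0%N * \det (Mf k.+1 (sh 1 f))).
Proof.
move=> Hu Hl; rewrite Mf_row0 [in X in X = _]big_ord_recl [in X in X = _]big_ord_recl.
rewrite [in X in X = _]big_ord_recr /= big1 ?add0r => [|j _]; last first.
  rewrite !bump0E Hu ?mul0r //; have := ltn_ord j; clear; lia.
have D1 : \det (Mf k.+2 (fun i j' => f i.+1 (bump 1 j'))) =
   f 1%N 0%N * \det (Mf k.+1 (sh 2 f)) + (-1) ^+ k.+1 * f k.+2 0%N * \prod_(i < k.+1) f i.+1 i.+2.
  rewrite col2 => [|i H1 H2]; last first.
    by rewrite bumpE /= Hl //; clear -H1 H2; lia.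
  rewrite (_ : bump 1 0 = 0%N) //; congr (_ * _ + _ * _).
    by apply: congr1; apply: Mf_ext => i j _ _; rewrite /sh bumpE /= !addn2.
  rewrite det_lowtri => [|i j Hij Hj]; last first.
    by rewrite bumpE /= Hu //; clear -Hij Hj; lia.
  by apply: eq_bigr => i _; rewrite bumpE.
have D2 : \det (Mf k.+2 (fun i j' => f i.+1 (bump k.+2 j'))) =
   f 1%N 0%N * \prod_(i < k.+1) f i.+2 i.+1 + (-1) ^+ k.+1 * f k.+2 0%N * \det (Mf k.+1 (sh 1 f)).
  rewrite (Mf_ext (g := fun i j => f i.+1 j)) => [|i j _ Hj]; last first.
    by rewrite bumpE ltnNge -ltnS Hj.
  rewrite col2 => [|i H1 H2]; last first.
    by rewrite Hl //; clear -H1 H2; lia.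
  congr (_ * _ + _ * _); last first.
    by apply: congr1; apply: Mf_ext => i j _ _; rewrite /sh !addn1.
  rewrite det_uptri => [|i j Hij Hj] //.
  by rewrite Hl //; clear -Hij Hj; lia.
have S1 : \det (Mf k.+2 (fun i j' => f i.+1 (bump 0 j'))) = \det (Mf k.+2 (sh 1 f)).
  by apply: congr1; apply: Mf_ext => i j _ _; rewrite /sh bump0E !addn1.
rewrite (_ : bump 0 0 = 1%N) // (_ : bump 0 (bump 0 k) = k.+2); last by rewrite !bump0E.
rewrite S1 D1 D2 expr0 expr1 mul1r; ring.
Qed.
End Dets.

Section Chain.
Variables (R : realFieldType) (x : R) (g : nat -> nat -> R).
Hypothesis x0 : 0 < x.
Hypothesis Gd : forall i, g i i = x.
Hypothesis Gb : forall i j, (i.+1 < j)%N \/ (j.+1 < i)%N -> g i j = 0.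
Definition q i := - (g i i.+1 * g i.+1 i).

Lemma Mf_sh0 k : Mf k (sh 0 g) = Mf k g.
Proof. by apply: Mf_ext => i j _ _; rewrite /sh !addn0. Qed.

Lemma det1 s : \det (Mf 1 (sh s g)) = x.
Proof. by rewrite det_mx11 mxE /sh Gd. Qed.

Lemma rec s k : \det (Mf k.+2 (sh s g)) =
  x * \det (Mf k.+1 (sh s.+1 g)) + q s * \det (Mf k (sh s.+2 g)).
Proof.
rewrite det_tri => [|j H1 H2|i H1 H2]; last 2 first.
- by rewrite /sh Gb //; lia.
- by rewrite /sh Gb //; lia.
rewrite /sh /q add0n add1n !Gd mulNr; congr (_ * _ - _ * _); f_equal;
  by apply: Mf_ext => i j _ _; congr g; lia.
Qed.

Lemma pos k : forall s, (forall i, (s <= i)%N -> (i.+1 < s + k)%N -> 0 < q i) ->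
  0 < \det (Mf k (sh s g)).
Proof.
elim/ltn_ind: k => k IH s Hq.
case: k IH Hq => [|[|k]] IH Hq; first by rewrite det_mx00.
  by rewrite det1.
rewrite rec.
have h1 : 0 < q s by apply: Hq; lia.
have h2 : 0 < \det (Mf k.+1 (sh s.+1 g)) by apply: IH => // i H1 H2; apply: Hq; lia.
have h3 : 0 < \det (Mf k (sh s.+2 g)) by apply: IH => // i H1 H2; apply: Hq; lia.
by apply: addr_gt0; apply: mulr_gt0.
Qed.

Lemma ge k s : (forall i, (s <= i)%N -> (i.+1 < s + k.+1)%N -> 0 < q i) ->
  x * \det (Mf k (sh s.+1 g)) <= \det (Mf k.+1 (sh s g)).
Proof.
case: k => [|k] Hq; first by rewrite det_mx00 det1 mulr1.
rewrite rec lerDl; apply/ltW/mulr_gt0; first by apply: Hq; lia.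
by apply: pos => i H1 H2; apply: Hq; lia.
Qed.

Lemma chain_neg m b Q :
  (forall i, (i < m)%N -> 0 < q i) -> q m < 0 -> q m.+1 < 0 ->
  (forall i, (m.+2 <= i)%N -> (i < m.+2 + b)%N -> 0 < q i) ->
  0 < Q -> x ^+ 2 = - q m.+1 - Q -> ((0 < b)%N -> Q = q m.+2) ->
  \det (Mf (m.+3 + b) g) < 0.
Proof.
move=> Hl Hm1 Hm2 Hr HQ Hx HQq.
have P1 : 0 < \det (Mf b.+1 (sh m.+2 g)) by apply: pos => i H1 H2; apply: Hr; lia.
have P2 : 0 < \det (Mf b (sh m.+3 g)) by apply: pos => i H1 H2; apply: Hr; lia.
have B : x * \det (Mf b.+1 (sh m.+2 g)) <= (x ^+ 2 + Q) * \det (Mf b (sh m.+3 g)).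
  case: b Hr HQq P1 P2 => [|b] Hr HQq P1 P2.
    by rewrite det_mx00 det1 mulr1 -expr2 lerDl ltW.
  rewrite rec -(HQq erefl) mulrDr mulrA -expr2 mulrDl lerD2l.
  rewrite mulrCA ler_pM2l //; apply: ge => i H1 H2; apply: Hr; lia.
have E0 : \det (Mf (b.+2) (sh m.+1 g)) <= 0.
  rewrite rec; move: B; rewrite Hx subrK mulNr; lra.
have E1 : \det (Mf (b.+3) (sh m g)) < 0.
  rewrite rec.
  have h1 : x * \det (Mf b.+2 (sh m.+1 g)) <= 0 by rewrite pmulr_rle0.
  have h2 : q m * \det (Mf b.+1 (sh m.+2 g)) < 0 by rewrite pmulr_llt0.
  lra.
suff H : forall t, (t <= m)%N ->
  \det (Mf (b.+3 + t) (sh (m - t) g)) < 0 /\ \det (Mf (b.+2 + t) (sh (m - t).+1 g)) <= 0.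
  have [] := H m (leqnn m); rewrite subnn Mf_sh0.
  by have -> : (m.+3 + b = b.+3 + m)%N by clear; lia.
elim=> [|t IH] Ht; first by rewrite !addn0 subn0.
have [IH1 IH2] := IH (ltnW Ht).
have E : (m - t = (m - t.+1).+1)%N by clear -Ht; lia.
rewrite E in IH1 IH2.
have -> : (b.+2 + t.+1 = b.+3 + t)%N by clear; lia.
split; last exact: ltW.
have -> : (b.+3 + t.+1 = (b.+2 + t).+2)%N by clear; lia.
rewrite rec; have hq : 0 < q (m - t.+1) by apply: Hl; clear -Ht; lia.
move: IH1 IH2; rewrite -addSn => IH1 IH2.
have h1 : x * \det (Mf (b.+2 + t).+1 (sh (m - t.+1).+1 g)) < 0 by rewrite pmulr_rlt0.
have h2 : q (m - t.+1) * \det (Mf (b.+2 + t) (sh (m - t.+1).+2 g)) <= 0 by rewrite pmulr_rle0.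
lra.
Qed.
End Chain.

Lemma char_poly_eval (R : comNzRingType) n (A : 'M[R]_n) c :
  (char_poly A).[c] = \det (c%:M - A).
Proof.
rewrite /char_poly -horner_evalE -det_map_mx; apply: congr1.
apply/matrixP => i j; rewrite !mxE rmorphB /= !horner_evalE hornerMn hornerX hornerC.
by [].
Qed.

Lemma root_gt (R : rcfType) n (A : 'M[R]_n) c :
  \det (c%:M - A) < 0 -> exists x, c < x /\ root (char_poly A) x.
Proof.
move=> Hc; have lc : lead_coef (char_poly A) = 1 by apply/monicP/char_poly_monic.
have lp : 0 < lead_coef (char_poly A) by rewrite lc ltr01.
have [M HM] := poly_pinfty_gt_lc lp.
set b := Num.max M (c + 1).
have Hb : (char_poly A).[b] >= 1 by rewrite -lc; apply: HM; rewrite le_max lexx.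
have Hcb : c <= b by rewrite le_max; apply/orP; right; lra.
have [x /andP [H1 H2] Hr] : exists2 x, c <= x <= b & root (char_poly A) x.
  apply: poly_ivt Hcb _; rewrite char_poly_eval; apply/andP; split; [exact: ltW | lra].
exists x; split => //; rewrite lt_neqAle H1 andbT; apply/eqP => Hx.
by move: Hr; rewrite -Hx rootE char_poly_eval lt_eqF.
Qed.

Lemma partb (R : realType) (alpha beta : int) (a : int -> R) :
     alpha <= -1 -> 1 <= beta ->
     a 0 < 0 ->
     (forall k : int, alpha <= k -> k <= Num.max beta 2 -> k != 0 -> 0 < a k) ->
     a 0 + a 2 < 0 ->
     exists x1 : R, Num.sqrt (- (a 1 * (a 0 + a 2))) < x1 /\
                    root (char_poly (triM alpha beta a)) x1.
Proof.
move=> Ha Hb a0 Hpos a02.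
case: alpha Ha Hpos => [n|m] Ha Hpos; first by exfalso; move: Ha; clear; lia.
case: beta Hb Hpos => [[|b]|n] Hb Hpos; try by exfalso; move: Hb; clear; lia.
have a1 : 0 < a 1 by apply: Hpos; rewrite ?le_max //; rewrite NegzE; clear; lia.
have a2 : 0 < a 2.
  apply: Hpos; rewrite ?le_max ?lexx ?orbT //; rewrite NegzE; clear; lia.
set c := Num.sqrt (- (a 1 * (a 0 + a 2))).
have hd : 0 < - (a 1 * (a 0 + a 2)) by nra.
have hcc : c ^+ 2 = - (a 1 * (a 0 + a 2)) by rewrite sqr_sqrtr // ltW.
have c0 : 0 < c by rewrite sqrtr_gt0.
apply: root_gt.
pose ft (i j : nat) := c *+ (i == j)%N - (if i.+1 == j then a (Negz m + j%:Z)
   else if j.+1 == i then - a (Negz m + j%:Z) else 0).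
have -> : c%:M - triM (Negz m) (Posz b.+1) a = Mf _ ft by apply/matrixP => i j; rewrite !mxE.
have -> : (`|Posz b.+1 - Negz m|.+1 = m.+3 + b)%N.
  by rewrite NegzE opprK -PoszD absz_nat; clear; lia.
have Gd : forall i, ft i i = c.
  by move=> i; rewrite /ft eqxx gtn_eqF // subr0.
have Gb : forall i j, (i.+1 < j)%N \/ (j.+1 < i)%N -> ft i j = 0.
  move=> i j H; rewrite /ft; case: eqP => [?|_]; first by exfalso; lia.
  case: eqP => [?|_]; first by exfalso; lia.
  by case: eqP => [?|_]; [exfalso; lia | rewrite subr0].
have qE : forall i, q ft i = a (Negz m + i.+1%:Z) * a (Negz m + i%:Z).
  move=> i; rewrite /q /ft eqxx ltn_eqF // gtn_eqF // gtn_eqF; last exact: leqW.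
  by rewrite mulr0n sub0r opprK; ring.
have eN : forall k : nat, Negz m + k%:Z = k%:Z - (m.+1)%:Z.
  by move=> k; rewrite NegzE addrC.
have HP : forall k : int, Negz m <= k -> k <= Posz b.+1 -> k != 0 -> 0 < a k.
  by move=> k H1 H2 H3; apply: Hpos => //; rewrite le_max H2.
apply: (@chain_neg _ c ft c0 Gd Gb m b (a 1 * a 2)).
- move=> i Hi; rewrite qE; apply: mulr_gt0; apply: HP;
    rewrite ?eN ?NegzE; try apply/eqP; clear -Hi; lia.
- rewrite qE !eN (_ : (m.+1%:Z - m.+1%:Z) = 0); last by clear; lia.
  rewrite (_ : (m%:Z - m.+1%:Z) = -1); last by clear; lia.
  have : 0 < a (-1) by apply: HP => //; rewrite NegzE; clear; lia.
  nra.
- rewrite qE !eN (_ : (m.+1%:Z - m.+1%:Z) = 0); last by clear; lia.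
  rewrite (_ : (m.+2%:Z - m.+1%:Z) = 1); last by clear; lia.
  nra.
- move=> i H1 H2; rewrite qE; apply: mulr_gt0; apply: HP;
    rewrite ?eN ?NegzE; try apply/eqP; clear -H1 H2; lia.
- exact: mulr_gt0.
- rewrite hcc qE !eN (_ : (m.+1%:Z - m.+1%:Z) = 0); last by clear; lia.
  rewrite (_ : (m.+2%:Z - m.+1%:Z) = 1); last by clear; lia.
  ring.
- move=> _; rewrite qE !eN (_ : (m.+3%:Z - m.+1%:Z) = 2); last by clear; lia.
  rewrite (_ : (m.+2%:Z - m.+1%:Z) = 1); last by clear; lia.
  ring.
Qed.

Lemma modS_eq (i j k : nat) : (i < k.+3)%N -> (j < k.+3)%N ->
 ((i.+1 %% k.+3 == j) = (i.+1 == j) || (i == k.+2) && (j == 0))%N.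
Proof.
move=> Hi Hj; case: (boolP (i == k.+2)) => [/eqP -> | ne].
  by rewrite modnn (gtn_eqF Hj) /= eq_sym.
rewrite modn_small ?(negbTE ne) ?orbF //; move/eqP: ne; clear -Hi; lia.
Qed.

Lemma parta (R : realType) (n : nat) (a : nat -> R) :
     (3 <= n)%N -> odd n ->
     a 0%N < 0 ->
     (forall k : nat, (k < n)%N -> k != 0%N -> 0 < a k) ->
     a 0%N + a 2%N < 0 ->
     exists x2 : R, Num.sqrt (- (a 1%N * (a 0%N + a 2%N))) < x2 /\
                    root (char_poly (cycA n a)) x2.
Proof.
case: n => [|[|[|k]]] // _ Hodd a0 Hpos a02.
have kev : odd k = false by move: Hodd => /=; rewrite !negbK => /negbTE.
have a1 : 0 < a 1%N by apply: Hpos.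
have a2 : 0 < a 2%N by apply: Hpos.
have ak : 0 < a k.+2 by apply: Hpos.
set c := Num.sqrt (- (a 1%N * (a 0%N + a 2%N))).
have hd : 0 < - (a 1%N * (a 0%N + a 2%N)) by nra.
have hcc : c ^+ 2 = - (a 1%N * (a 0%N + a 2%N)) by rewrite sqr_sqrtr // ltW.
have c0 : 0 < c by rewrite sqrtr_gt0.
apply: root_gt.
pose fc (i j : nat) := c *+ (i == j)%N - (if (i.+1 == j) || (i == k.+2) && (j == 0%N) then a j
   else if (j.+1 == i) || (j == k.+2) && (i == 0%N) then - a j else 0).
have -> : c%:M - cycA k.+3 a = Mf k.+3 fc.
  by apply/matrixP => i j; rewrite !mxE !modS_eq.
rewrite det_cyc; last first.
- move=> i j H1 H2 H3; rewrite /fc; clear -H1 H2 H3.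
  do ![case: eqP => ?]; rewrite /= ?mulr0n ?subr0 //; exfalso; lia.
- move=> i j H1 H2 H3; rewrite /fc; clear -H1 H2 H3.
  do ![case: eqP => ?]; rewrite /= ?mulr0n ?subr0 //; exfalso; lia.
have f00 : fc 0%N 0%N = c by rewrite /fc /= mulr1n subr0.
have f01 : fc 0%N 1%N = - a 1%N by rewrite /fc /= mulr0n sub0r.
have f10 : fc 1%N 0%N = a 0%N by rewrite /fc /= mulr0n sub0r opprK.
have fk0 : fc k.+2 0%N = - a 0%N by rewrite /fc /= eqxx /= mulr0n sub0r.
have f0k : fc 0%N k.+2 = a k.+2 by rewrite /fc /= eqxx /= mulr0n sub0r opprK.
have pr1 : \prod_(i < k.+1) fc i.+1 i.+2 = - \prod_(i < k.+1) a i.+2.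
  rewrite (eq_bigr (fun i : 'I_k.+1 => - a (i : nat).+2)) => [|i _]; last first.
    rewrite /fc; clear; do ![case: eqP => ?]; rewrite /= ?mulr0n ?sub0r //; exfalso; lia.
  by rewrite prodrN card_ord -signr_odd /= kev expr1 mulN1r.
have pr2 : \prod_(i < k.+1) fc i.+2 i.+1 = \prod_(i < k.+1) a i.+1.
  apply: eq_bigr => i _.
  rewrite /fc; clear; do ![case: eqP => ?]; rewrite /= ?mulr0n ?sub0r ?opprK //; exfalso; lia.
pose fb (i j : nat) := c *+ (i == j)%N - (if i.+1 == j then a j
   else if j.+1 == i then - a j else 0).
have S1 : forall kk, Mf kk (sh 1 fc) = Mf kk (sh 1 fb).
  move=> kk; apply: Mf_ext => i j _ _; rewrite /sh /fc /fb !addn1 /= !andbF !orbF //.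
have S2 : forall kk, Mf kk (sh 2 fc) = Mf kk (sh 2 fb).
  move=> kk; apply: Mf_ext => i j _ _; rewrite /sh /fc /fb !addn2 /= !andbF !orbF //.
rewrite f00 f01 f10 fk0 f0k pr1 pr2 !S1 S2.
have s1 : (-1) ^+ k.+1 = -1 :> R by rewrite -signr_odd /= kev.
have s2 : (-1) ^+ k.+2 = 1 :> R by rewrite -signr_odd /= negbK kev.
rewrite s1 s2.
have Pid : a 1%N * \prod_(i < k.+1) a i.+2 = a k.+2 * \prod_(i < k.+1) a i.+1.
  transitivity (\prod_(i < k.+2) a i.+1).
    by rewrite [in RHS]big_ord_recl; congr (_ * _); apply: eq_bigr => i _; rewrite lift0.
  by rewrite [in LHS]big_ord_recr /= mulrC.
have Gd : forall i, fb i i = c.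
  by move=> i; rewrite /fb eqxx gtn_eqF // subr0.
have Gb : forall i j, (i.+1 < j)%N \/ (j.+1 < i)%N -> fb i j = 0.
  move=> i j H; rewrite /fb; case: eqP => [?|_]; first by exfalso; lia.
  case: eqP => [?|_]; first by exfalso; lia.
  by case: eqP => [?|_]; [exfalso; lia | rewrite subr0].
have qE : forall i, q fb i = a i.+1 * a i.
  move=> i; rewrite /q /fb eqxx ltn_eqF // gtn_eqF // gtn_eqF; last exact: leqW.
  by rewrite mulr0n sub0r opprK; ring.
have P2 : 0 < \det (Mf k.+1 (sh 2 fb)).
  apply: (pos c0 Gd Gb) => i H1 H2; rewrite qE; apply: mulr_gt0; apply: Hpos;
    try apply/eqP; clear -H1 H2; lia.
have Pin : 0 < \det (Mf k.+1 (sh 1 fb)).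
  apply: (pos c0 Gd Gb) => i H1 H2; rewrite qE; apply: mulr_gt0; apply: Hpos;
    try apply/eqP; clear -H1 H2; lia.
have G3 : c * \det (Mf k (sh 3 fb)) <= \det (Mf k.+1 (sh 2 fb)).
  apply: (ge c0 Gd Gb) => i H1 H2; rewrite qE; apply: mulr_gt0; apply: Hpos;
    try apply/eqP; clear -H1 H2; lia.
rewrite (rec c0 Gd Gb) qE.
set X1 := \prod_(i < k.+1) a i.+1.
set X2 := \prod_(i < k.+1) a i.+2.
set D2 := \det (Mf k.+1 (sh 2 fb)).
set D3 := \det (Mf k (sh 3 fb)).
set Di := \det (Mf k.+1 (sh 1 fb)).
set L := (X in X < 0).
have -> : L = c ^+ 2 * D2 + a 2%N * a 1%N * (c * D3) + a 0%N * a 1%N * D2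
   + a 0%N * a k.+2 * Di + a 0%N * (a k.+2 * X1 - a 1%N * X2) by rewrite /L; ring.
rewrite Pid subrr mulr0 addr0 hcc.
have h1 : a 2%N * a 1%N * (c * D3) <= a 2%N * a 1%N * D2 by rewrite ler_pM2l // mulr_gt0.
have h2 : a 0%N * a k.+2 * Di < 0 by rewrite pmulr_llt0 // nmulr_rlt0.
have -> : - (a 1%N * (a 0%N + a 2%N)) * D2 = - (a 2%N * a 1%N * D2) - a 0%N * a 1%N * D2 by ring.
lra.
Qed.
End Aux.
Import Aux.

Theorem lemma4 (R : realType) :
  (forall (n : nat) (a : nat -> R),
     (3 <= n)%N -> odd n ->
     a 0%N < 0 ->
     (forall k : nat, (k < n)%N -> k != 0%N -> 0 < a k) ->
     a 0%N + a 2%N < 0 ->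
     exists x2 : R, Num.sqrt (- (a 1%N * (a 0%N + a 2%N))) < x2 /\
                    root (char_poly (cycA n a)) x2)
  /\
  (forall (alpha beta : int) (a : int -> R),
     alpha <= -1 -> 1 <= beta ->
     a 0 < 0 ->
     (forall k : int, alpha <= k -> k <= Num.max beta 2 -> k != 0 -> 0 < a k) ->
     a 0 + a 2 < 0 ->
     exists x1 : R, Num.sqrt (- (a 1 * (a 0 + a 2))) < x1 /\
                    root (char_poly (triM alpha beta a)) x1).
Proof.
split; [exact: parta | exact: partb].
Qed.
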